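(* Let $\widetilde Y\in\mathbb{R}^{m\times N}$ have nonzero columns $\widetilde Y_1,\dots,\widetilde Y_N$ and let $\widetilde w\in\mathbb{R}^N$ be a deterministic vector (e.g. obtained from a data-alignment step that does not use the quantizer randomness). Run Phase II with the infinite alphabet $\mathcal A_\infty^\delta$: $\widetilde u_0=0$ and for $t=1,\dots,N$, $\widetilde q_t=\mathcal{Q}_{\mathrm{StocQ}}\bigl(\widetilde w_t+\langle\widetilde Y_t,\widetilde u_{t-1}\rangle/\|\widetilde Y_t\|_2^2\bigr)$, $\widetilde u_t=\widetilde u_{t-1}+(\widetilde w_t-\widetilde q_t)\widetilde Y_t$, so that $\widetilde u_N=\widetilde Y(\widetilde w-\widetilde q)$. Then for every $p\in\mathbb N$, $$\|\widetilde u_N\|_2\le \delta\sqrt{2\pi p m\log N}\,\max_{1\le j\le N}\|\widetilde Y_j\|_2$$ holds with probability at least $1-\sqrt2\, m/N^{p}$.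
   Context: $\mathcal A_\infty^\delta=\{k\delta:k\in\mathbb Z\}$ with $\delta>0$. The stochastic quantizer $\mathcal{Q}_{\mathrm{StocQ}}:\mathbb R\to\mathcal A_\infty^\delta$ returns $\lfloor z/\delta\rfloor\delta$ with probability $1-z/\delta+\lfloor z/\delta\rfloor$ and $(\lfloor z/\delta\rfloor+1)\delta$ otherwise (so $\mathbb E\,\mathcal{Q}_{\mathrm{StocQ}}(z)=z$); each call uses fresh randomness, independent of everything else given its argument. *)

(* Defs.v *)
From HB Require Import structures.
From mathcomp Require Import all_boot all_order all_algebra.
From mathcomp Require Import all_classical all_reals all_analysis.
Set Implicit Arguments. Unset Strict Implicit. Unset Printing Implicit Defensive.
Import Order.TTheory GRing.Theory Num.Theory.
Local Open Scope ring_scope.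

Section StocQ.
Variables (R : realType) (m N : nat).

Definition dotv (x y : 'cV[R]_m) : R := \sum_(i < m) x i 0 * y i 0.
Definition norm2 (x : 'cV[R]_m) : R := Num.sqrt (\sum_(i < m) x i 0 ^+ 2).

(* 0-indexed access: step k (k = 0..N-1) corresponds to t = k+1 in the paper *)
Definition colk (Y : 'M[R]_(m, N)) (k : nat) : 'cV[R]_m :=
  if @insub nat (fun k => (k < N)%N) (ordinal N) k is Some i then col i Y else 0.
Definition wk (w : 'cV[R]_N) (k : nat) : R :=
  if @insub nat (fun k => (k < N)%N) (ordinal N) k is Some i then w i 0 else 0.
Definition bk (b : {ffun 'I_N -> bool}) (k : nat) : bool :=
  if @insub nat (fun k => (k < N)%N) (ordinal N) k is Some i then b i else false.

(* The randomness of the k-th call of Q_StocQ is encoded by the bit b k: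
   false = round down to floor(z/delta) delta, true = round up to
   (floor(z/delta)+1) delta.  state k = (u_k, probability of the bit prefix). *)
Fixpoint phase2_state (delta : R) (Y : 'M[R]_(m, N)) (w : 'cV[R]_N)
    (b : {ffun 'I_N -> bool}) (k : nat) : 'cV[R]_m * R :=
  match k with
  | 0 => (0, 1)
  | k'.+1 =>
      let (u, pw) := phase2_state delta Y w b k' in
      let Yt := colk Y k' in
      let z := wk w k' + dotv Yt u / (norm2 Yt ^+ 2) in
      let fl := Num.floor (z / delta) in
      let up := bk b k' in
      let q := (fl%:~R + (up : nat)%:R) * delta in
      let pr := if up then z / delta - fl%:~R else 1 - (z / delta - fl%:~R) in
      (u + (wk w k' - q) *: Yt, pw * pr)
  end.

Definition phase2_uN delta Y w b : 'cV[R]_m := (phase2_state delta Y w b N).1.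
Definition phase2_weight delta Y w b : R := (phase2_state delta Y w b N).2.

Definition phase2_prob delta Y w (E : pred 'cV[R]_m) : R :=
  \sum_(b : {ffun 'I_N -> bool} | E (phase2_uN delta Y w b))
     phase2_weight delta Y w b.

Definition max_col_norm (Y : 'M[R]_(m, N)) : R :=
  \big[Num.max/0]_(j < N) norm2 (col j Y).

End StocQ.

(* Main.v *)
Require Import Defs.
From HB Require Import structures.
From mathcomp Require Import all_boot all_order all_algebra.
From mathcomp Require Import all_classical all_reals all_analysis.
From mathcomp Require Import lra ring zify.
Import Order.TTheory GRing.Theory Num.Theory.
Local Open Scope ring_scope.


Section ExpFacts.
Variable R : realType.
Definition chh (y : R) := (expR y + expR (- y)) / 2.

Lemma expR_conv (a p q : R) : 0 <= a <= 1 ->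
  expR (a * p + (1 - a) * q) <= a * expR p + (1 - a) * expR q.
Proof.
move=> /andP[a0 a1].
set mm := a * p + (1 - a) * q.
have Ep : expR p = expR mm * expR (p - mm) by rewrite -expRD addrC subrK.
have Eq : expR q = expR mm * expR (q - mm) by rewrite -expRD addrC subrK.
have h1 := expR_ge1Dx (p - mm); have h2 := expR_ge1Dx (q - mm).
have e0 := expR_gt0 mm.
have k1 : 0 <= a * expR mm * (expR (p - mm) - (1 + (p - mm))).
  by rewrite !mulr_ge0 ?subr_ge0 // ltW.
have k2 : 0 <= (1 - a) * expR mm * (expR (q - mm) - (1 + (q - mm))).
  by rewrite !mulr_ge0 ?subr_ge0 // ltW.
rewrite Ep Eq.
have : a * expR mm * (p - mm) + (1 - a) * expR mm * (q - mm) = 0.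
  rewrite /mm; ring.
nra.
Qed.

Lemma chh_ge0 y : 0 <= chh y.
Proof. by rewrite /chh divr_ge0 // addr_ge0 // expR_ge0. Qed.

Lemma chh_double y : chh (2 * y) = 2 * chh y ^+ 2 - 1.
Proof.
have H : expR y * expR (- y) = 1 by rewrite -expRD subrr expR0.
have -> : 2 * y = y + y by ring.
rewrite /chh opprD !expRD.
set A := expR y; set B := expR (- y).
have -> : 2 * ((A + B) / 2) ^+ 2 - 1 = (A * A + B * B) / 2 + (A * B - 1) by field.
by rewrite H subrr addr0.
Qed.

Lemma chh_small y : `|y| <= 1/4 -> chh y <= expR (2/3 * y ^+ 2).
Proof.
move=> hy.
have /andP[hy1 hy2] : -(1/4) <= y <= 1/4 by rewrite -ler_norml.
set h := y / 4.
have hP : 0 < 1 - h by rewrite /h; lra.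
have hN : 0 < 1 + h by rewrite /h; lra.
have a1 : expR h <= (1 - h)^-1.
  have H : 1 - h <= (expR h)^-1 by rewrite -expRN expR_ge1Dx.
  rewrite -(invrK (expR h)) lef_pV2 ?posrE ?invr_gt0 ?expR_gt0 //.
have b1 : expR (- h) <= (1 + h)^-1.
  have H : 1 + h <= (expR (- h))^-1 by rewrite -expRN opprK expR_ge1Dx.
  rewrite -(invrK (expR (- h))) lef_pV2 ?posrE ?invr_gt0 ?expR_gt0 //.
have ey : expR y = expR h ^+ 4 by rewrite -expRM_natl /h; congr expR; rewrite mulrC -mulrA mulVf ?mulr1 //.
have eny : expR (- y) = expR (- h) ^+ 4.
  by rewrite -expRM_natl /h; congr expR; rewrite mulrN mulrC -mulrA mulVf ?mulr1 //.
have A4 : expR h ^+ 4 <= (1 - h)^-1 ^+ 4 by rewrite lerXn2r // ?nnegrE ?expR_ge0 // invr_ge0 ltW.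
have B4 : expR (- h) ^+ 4 <= (1 + h)^-1 ^+ 4 by rewrite lerXn2r // ?nnegrE ?expR_ge0 // invr_ge0 ltW.
have low := expR_ge1Dx (2/3 * y ^+ 2).
apply: le_trans low.
rewrite /chh ey eny.
apply: (le_trans (y := ((1 - h)^-1 ^+ 4 + (1 + h)^-1 ^+ 4) / 2)).
  by rewrite ler_pM2r // lerD.
have -> : ((1 - h)^-1 ^+ 4 + (1 + h)^-1 ^+ 4) / 2 =
  ((1 + h) ^+ 4 + (1 - h) ^+ 4) / (2 * ((1 - h) * (1 + h)) ^+ 4).
  by field; rewrite ?gt_eqF // ?mulr_gt0.
rewrite ler_pdivrMr ?mulr_gt0 ?exprn_gt0 ?mulr_gt0 //.
have yE : y = 4 * h by rewrite /h; field.
rewrite yE.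
set t := h ^+ 2.
have t0 : 0 <= t by rewrite /t sqr_ge0.
have t1 : t <= 1/256 by rewrite /t /h; nra.
have -> : (1 + h) ^+ 4 + (1 - h) ^+ 4 = 2 + 12 * t + 2 * t ^+ 2 by rewrite /t; ring.
have -> : (1 + 2 / 3 * (4 * h) ^+ 2) * (2 * ((1 - h) * (1 + h)) ^+ 4)
   = 2 * (1 + 32/3 * t) * (1 - t) ^+ 4 by rewrite /t; ring.
have b4 : 1 - 4 * t <= (1 - t) ^+ 4 by nra.
nra.
Qed.

Lemma chh_doubling (r : R) : 0 <= r ->
  (forall y, `|y| <= r -> chh y <= expR (2/3 * y ^+ 2)) ->
  forall y, `|y| <= 2 * r -> chh y <= expR (2/3 * y ^+ 2).
Proof.
move=> r0 H y hy.
have hy2 : `|y / 2| <= r by rewrite normrM (ger0_norm (_ : 0 <= 2^-1)) //; lra.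
have := H _ hy2; set b := expR _ => Hb.
have -> : y = 2 * (y / 2) by field.
rewrite chh_double.
have b0 : 0 < b by rewrite expR_gt0.
have b2 : chh (y / 2) ^+ 2 <= b ^+ 2 by rewrite lerXn2r // ?nnegrE ?chh_ge0 // ltW.
have -> : expR (2 / 3 * (2 * (y / 2)) ^+ 2) = b ^+ 4.
  by rewrite /b -expRM_natl; congr expR; ring.
have : 0 <= (b ^+ 2 - 1) ^+ 2 by rewrite sqr_ge0.
move: b2; set c := chh _ ^+ 2; set d := b ^+ 2.
have -> : b ^+ 4 = d ^+ 2 by rewrite /d -exprM.
nra.
Qed.

Lemma chh_bound y : chh y <= expR (2/3 * y ^+ 2).
Proof.
have [hy|hy] := leP (3/2) `|y|.
  have H1 : y <= 2/3 * y ^+ 2.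
    have := ler_norm y; rewrite -real_normK ?num_real //; nra.
  have H2 : - y <= 2/3 * y ^+ 2.
    have := ler_norm (- y); rewrite normrN -real_normK ?num_real //; nra.
  rewrite /chh ler_pdivrMr // mulr_natr mulr2n lerD // ler_expR //.
have base := chh_small.
have d1 := @chh_doubling (1/4) ltac:(lra) base.
have d2 := @chh_doubling (2 * (1/4)) ltac:(lra) d1.
have d3 := @chh_doubling (2 * (2 * (1/4))) ltac:(lra) d2.
apply: d3; lra.
Qed.

Lemma mgf_bound (f y : R) : 0 <= f <= 1 ->
  (1 - f) * expR (f * y) + f * expR ((f - 1) * y) <= expR (2/3 * y ^+ 2).
Proof.
move=> /andP[f0 f1].
apply: le_trans (chh_bound y).
have h1 : expR (f * y) <= (1 + f) / 2 * expR y + (1 - (1 + f) / 2) * expR (- y).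
  have -> : f * y = (1 + f) / 2 * y + (1 - (1 + f) / 2) * (- y) by field.
  apply: expR_conv; apply/andP; split; lra.
have h2 : expR ((f - 1) * y) <= f / 2 * expR y + (1 - f / 2) * expR (- y).
  have -> : (f - 1) * y = f / 2 * y + (1 - f / 2) * (- y) by field.
  apply: expR_conv; apply/andP; split; lra.
have k1 := ler_wpM2l (_ : 0 <= 1 - f) h1.
have k2 := ler_wpM2l f0 h2.
rewrite /chh.
have := k1 ltac:(lra); move: k2.
set A := expR y; set B := expR (- y); nra.
Qed.
End ExpFacts.

Set Implicit Arguments. Unset Strict Implicit.



Section Vec.
Variables (R : realType) (m : nat).
Implicit Types (x y v u Yt : 'cV[R]_m).

Definition sqv v : R := \sum_(i < m) v i 0 ^+ 2.
Definition vproj Yt v : 'cV[R]_m := v - (dotv v Yt / sqv Yt) *: Yt.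

Lemma sq_ge0 v : 0 <= sqv v.
Proof. by rewrite /sqv sumr_ge0 // => i _; rewrite sqr_ge0. Qed.

Lemma sq_eq0 v : sqv v = 0 -> v = 0.
Proof.
move=> H; apply/matrixP => i j; rewrite (ord1 j) mxE.
have := @psumr_eq0P _ _ xpredT (fun i => v i 0 ^+ 2) (fun i _ => sqr_ge0 _) H i isT.
by move=> /eqP; rewrite sqrf_eq0 => /eqP.
Qed.

Lemma norm2_sq v : norm2 v = Num.sqrt (sqv v).
Proof. by []. Qed.

Lemma norm2_sqr v : norm2 v ^+ 2 = sqv v.
Proof. by rewrite /norm2 sqr_sqrtr // sq_ge0. Qed.

Lemma dotvC x y : dotv x y = dotv y x.
Proof. by apply: eq_bigr => i _; rewrite mulrC. Qed.

Lemma dotvDr x y v : dotv x (y + v) = dotv x y + dotv x v.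
Proof. by rewrite /dotv -big_split; apply: eq_bigr => i _; rewrite mxE mulrDr. Qed.

Lemma dotvZr x y (a : R) : dotv x (a *: y) = a * dotv x y.
Proof. by rewrite /dotv mulr_sumr; apply: eq_bigr => i _; rewrite mxE mulrCA. Qed.

Lemma dotv_projl v Yt (s : R) u : dotv (v - s *: Yt) u = dotv v u - s * dotv Yt u.
Proof.
by rewrite /dotv mulr_sumr -sumrB; apply: eq_bigr => i _; rewrite !mxE; ring.
Qed.

Lemma dotv0r x : dotv x 0 = 0.
Proof. by rewrite /dotv big1 // => i _; rewrite mxE mulr0. Qed.

Lemma sq_proj v Yt : sqv Yt != 0 ->
  sqv (vproj Yt v) = sqv v - dotv v Yt ^+ 2 / sqv Yt.
Proof.
move=> q0; rewrite /vproj.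
set s := dotv v Yt / sqv Yt.
have -> : sqv (v - s *: Yt) = sqv v + ((- (2 * s)) * dotv v Yt + s ^+ 2 * sqv Yt).
  rewrite /sqv /dotv !mulr_sumr -!big_split /=.
  by apply: eq_bigr => i _; rewrite !mxE; ring.
rewrite /s; move: q0; set q := sqv Yt; set c := dotv v Yt => q0.
by field.
Qed.

Definition ev (i : 'I_m) (s : R) : 'cV[R]_m := \col_(j < m) (if j == i then s else 0).

Lemma dotv_ev i s u : dotv (ev i s) u = s * u i 0.
Proof.
rewrite /dotv (bigD1 i) //= big1 ?addr0 => [|j Hj]; rewrite !mxE ?eqxx //.
by rewrite (negbTE Hj) mul0r.
Qed.

Lemma sq_ev i s : sqv (ev i s) = s ^+ 2.
Proof.
rewrite /sqv (bigD1 i) //= big1 ?addr0 => [|j Hj]; rewrite !mxE ?eqxx //.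
by rewrite (negbTE Hj) expr0n.
Qed.
End Vec.



Section Proc.
Variables (R : realType) (m N : nat) (delta : R) (Y : 'M[R]_(m, N)) (w : 'cV[R]_N).

Definition st (b : {ffun 'I_N -> bool}) k := phase2_state delta Y w b k.
Definition zz k (u : 'cV[R]_m) := wk w k + dotv (colk Y k) u / (norm2 (colk Y k) ^+ 2).
Definition fl k u := Num.floor (zz k u / delta).
Definition nxt k u (bt : bool) : 'cV[R]_m :=
  u + (wk w k - ((fl k u)%:~R + (bt : nat)%:R) * delta) *: colk Y k.
Definition prb k u (bt : bool) : R :=
  if bt then zz k u / delta - (fl k u)%:~R else 1 - (zz k u / delta - (fl k u)%:~R).

Lemma stS b k : st b k.+1 = (nxt k (st b k).1 (bk b k), (st b k).2 * prb k (st b k).1 (bk b k)).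
Proof. by rewrite /st /=; case: (phase2_state delta Y w b k). Qed.

Lemma bk_ord b k (Hk : (k < N)%N) : bk b k = b (Ordinal Hk).
Proof.
rewrite /bk; case: insubP => [i _ /= Hi|]; last by rewrite Hk.
by congr (b _); apply/val_inj.
Qed.

Lemma colk_ord k (Hk : (k < N)%N) : colk Y k = col (Ordinal Hk) Y.
Proof.
rewrite /colk; case: insubP => [i _ /= Hi|]; last by rewrite Hk.
by congr (col _ Y); apply/val_inj.
Qed.

Lemma st_indep k (b b' : {ffun 'I_N -> bool}) : (forall i : 'I_N, (i < k)%N -> b i = b' i) -> st b k = st b' k.
Proof.
elim: k => [//|k IH] H; rewrite !stS IH; last first.
  by move=> i Hi; apply: H; rewrite ltnS ltnW.
have -> // : bk b k = bk b' k.
rewrite /bk; case: insubP => //= i _ Hi; apply: H; by rewrite Hi.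
Qed.

Definition flip (i : 'I_N) (b : {ffun 'I_N -> bool}) : {ffun 'I_N -> bool} :=
  [ffun j => if j == i then ~~ b j else b j].

Lemma flipK i : cancel (flip i) (flip i).
Proof. by move=> b; apply/ffunP => j; rewrite !ffunE; case: eqP => //; rewrite negbK. Qed.

Lemma flip_at i b : flip i b i = ~~ b i.
Proof. by rewrite ffunE eqxx. Qed.

Lemma flip_ne i j b : j != i -> flip i b j = b j.
Proof. by move=> H; rewrite ffunE (negbTE H). Qed.

Lemma sum_flip i (F : {ffun 'I_N -> bool} -> R) :
  \sum_(b : {ffun 'I_N -> bool}) F b = \sum_(b : {ffun 'I_N -> bool} | ~~ b i) (F b + F (flip i b)).
Proof.
rewrite (bigID (fun b : {ffun 'I_N -> bool} => b i)) /= big_split /= addrC; congr (_ + _).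
rewrite (reindex_inj (can_inj (flipK i))) /=.
by apply: eq_bigl => b; rewrite flip_at.
Qed.

Definition AA k (G : 'cV[R]_m -> R) := \sum_(b : {ffun 'I_N -> bool}) (st b k).2 * G (st b k).1.

Lemma prb_ge0 k u bt : 0 <= prb k u bt.
Proof.
rewrite /prb; set x := zz k u / delta.
have h1 := floor_le x.
have h2 : x < (fl k u + 1)%:~R by rewrite -floor_lt_int ltrDl.
rewrite intrD /= -/(fl k u) in h1 h2 *.
by case: bt; lra.
Qed.

Lemma prb_sum k u : prb k u false + prb k u true = 1.
Proof. by rewrite /prb; ring. Qed.

Lemma w_ge0 k b : 0 <= (st b k).2.
Proof. elim: k => [|k IH]; first by rewrite /st /=. by rewrite stS /= mulr_ge0 // prb_ge0. Qed.

Lemma AA_step k (Hk : (k < N)%N) (G G' : 'cV[R]_m -> R) :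
  (forall u, prb k u false * G' (nxt k u false) + prb k u true * G' (nxt k u true) <= G u) ->
  2 * AA k.+1 G' <= AA k G.
Proof.
move=> H; set i := Ordinal Hk.
rewrite /AA (sum_flip i) [X in _ <= X](sum_flip i) mulr_sumr.
apply: ler_sum => b Hb.
have E : st (flip i b) k = st b k.
  apply: st_indep => j Hj; rewrite flip_ne //.
  by apply/eqP => Hji; move: Hj; rewrite Hji /= ltnn.
rewrite !stS E !(@bk_ord _ k Hk) -/i flip_at (negbTE Hb) /=.
have := ler_wpM2l (w_ge0 k b) (H (st b k).1); rewrite /prb /=.
set pw := (st b k).2; set u := (st b k).1.
set A := G' (nxt k u false); set B := G' (nxt k u true); set f := zz k u / delta - (fl k u)%:~R; set C := G u.
move=> HH; apply: le_trans (_ : 2 * (pw * ((1 - f) * A + f * B)) <= _).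
  by rewrite le_eqVlt; apply/orP; left; apply/eqP; ring.
lra.
Qed.

Lemma AA0 G : AA 0 G = (2 ^ N)%:R * G 0.
Proof.
rewrite /AA /st /=; under eq_bigr do rewrite mul1r.
by rewrite sumr_const card_ffun card_bool card_ord mulr_natl.
Qed.

Lemma AA_chain (G : nat -> 'cV[R]_m -> R) :
  (forall k, (k < N)%N -> forall u,
     prb k u false * G k.+1 (nxt k u false) + prb k u true * G k.+1 (nxt k u true) <= G k u) ->
  AA N (G N) <= G 0%N 0.
Proof.
move=> H.
suff S : forall k, (k <= N)%N -> (2 ^ k)%:R * AA k (G k) <= (2 ^ N)%:R * G 0%N 0.
  by have := S N (leqnn N); rewrite ler_pM2l // ltr0n expn_gt0.
elim=> [|k IH] Hk; first by rewrite mul1r AA0.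
apply: le_trans (IH (ltnW Hk)).
rewrite expnS natrM -mulrA mulrCA ler_pM2l ?ltr0n ?expn_gt0 //.
have X := @AA_step k Hk (G k) (G k.+1) (H k Hk). exact X.
Qed.

Lemma total_weight : AA N (fun _ => 1) = 1.
Proof.
apply/eqP; rewrite eq_le; apply/andP; split.
  by apply: (@AA_chain (fun _ _ => 1)) => k Hk u; rewrite !mulr1 prb_sum.
have H1 : AA N (fun _ => -1) <= -1.
  apply: (@AA_chain (fun _ _ => -1)) => k Hk u.
  by rewrite !mulrN1 -opprD prb_sum.
move: H1; have -> : AA N (fun _ => -1) = - AA N (fun _ => 1).
  by rewrite /AA -sumrN; apply: eq_bigr => b _; rewrite mulrN1 mulr1.
by rewrite lerN2.
Qed.
End Proc.



Section Pot.
Variables (R : realType) (m N : nat) (delta : R) (Y : 'M[R]_(m, N)) (w : 'cV[R]_N).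
Variable x : 'cV[R]_m.
Local Notation PRB := (@prb R m N delta Y w).
Local Notation NXT := (@nxt R m N delta Y w).
Local Notation AAA := (@AA R m N delta Y w).

Fixpoint xr (d : nat) : 'cV[R]_m :=
  if d is d'.+1 then vproj (colk Y (N - d)) (xr d') else x.
Definition xk k := xr (N - k).
Definition cj k := dotv (xk k.+1) (colk Y k).
Definition Cst k := \sum_(k <= j < N) cj j ^+ 2.
Definition GG k u := expR (dotv (xk k) u + 2/3 * delta ^+ 2 * Cst k).

Lemma xkS k : (k < N)%N -> xk k = vproj (colk Y k) (xk k.+1).
Proof.
move=> Hk; rewrite /xk.
have -> : (N - k = (N - k.+1).+1)%N by lia.
rewrite [LHS]/=.
by have -> : (N - (N - k.+1).+1 = k)%N by lia.
Qed.

Lemma CstS k : (k < N)%N -> Cst k = cj k ^+ 2 + Cst k.+1.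
Proof. by move=> Hk; rewrite /Cst big_ltn. Qed.

Lemma GG_step (d0 : 0 < delta) k (Hk : (k < N)%N) u :
  PRB k u false * GG k.+1 (NXT k u false) + PRB k u true * GG k.+1 (NXT k u true) <= GG k u.
Proof.
have key : forall bt : bool, dotv (xk k.+1) (NXT k u bt) =
    dotv (xk k) u + delta * (zz Y w k u / delta - (fl delta Y w k u)%:~R - (bt : nat)%:R) * cj k.
  move=> bt; rewrite /nxt dotvDr dotvZr (xkS Hk) /vproj dotv_projl /cj.
  set Yt := colk Y k; set X := xk k.+1.
  have zE : zz Y w k u = wk w k + dotv Yt u / sqv Yt by rewrite /zz norm2_sqr.
  have dZ : delta * (zz Y w k u / delta) = zz Y w k u by rewrite mulrC divfK // gt_eqF.
  have wE : wk w k = delta * (zz Y w k u / delta) - dotv Yt u / sqv Yt by rewrite dZ zE; ring.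
  rewrite wE; ring.
have f0 := prb_ge0 delta Y w k u true.
have f1 := prb_ge0 delta Y w k u false.
rewrite /GG (CstS Hk) !key.
rewrite /prb /= in f0 f1 *.
set f := zz Y w k u / delta - (fl delta Y w k u)%:~R in f0 f1 *.
set D := dotv (xk k) u; set c := cj k; set C1 := Cst k.+1.
set P := expR (D + 2 / 3 * delta ^+ 2 * C1).
have -> : expR (D + delta * (f - 0) * c + 2 / 3 * delta ^+ 2 * C1) = P * expR (f * (delta * c)).
  by rewrite -expRD; congr expR; ring.
have -> : expR (D + delta * (f - 1) * c + 2 / 3 * delta ^+ 2 * C1) = P * expR ((f - 1) * (delta * c)).
  by rewrite -expRD; congr expR; ring.
have -> : expR (D + 2 / 3 * delta ^+ 2 * (c ^+ 2 + C1)) = P * expR (2/3 * (delta * c) ^+ 2).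
  by rewrite -expRD; congr expR; ring.
have Mg := @mgf_bound R f (delta * c) (_ : 0 <= f <= 1).
have P0 : 0 <= P by rewrite expR_ge0.
apply: le_trans (_ : P * ((1 - f) * expR (f * (delta * c)) + f * expR ((f - 1) * (delta * c))) <= _).
  by rewrite le_eqVlt; apply/orP; left; apply/eqP; ring.
by rewrite ler_wpM2l // Mg // f0 /=; lra.
Qed.

Lemma Cst_bound (M2 : R) : 0 <= M2 -> (forall j, (j < N)%N -> sqv (colk Y j) <= M2) ->
  Cst 0 <= M2 * sqv x.
Proof.
move=> M20 HM.
have step : forall j, (0 <= j < N)%N -> cj j ^+ 2 <= M2 * (sqv (xk j.+1) - sqv (xk j)).
  move=> j /andP[_ Hj]; rewrite (xkS Hj) /cj.
  set Yt := colk Y j; set X := xk j.+1.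
  have [q0|q0] := eqVneq (sqv Yt) 0.
    have -> : Yt = 0 by exact: sq_eq0.
    by rewrite dotv0r /vproj scaler0 subr0 subrr mulr0 expr0n.
  rewrite sq_proj // opprB addrC subrK.
  have qp : 0 < sqv Yt by rewrite lt_neqAle eq_sym q0 sq_ge0.
  rewrite [X in X <= _](_ : _ = sqv Yt * (dotv X Yt ^+ 2 / sqv Yt)); last by field.
  rewrite ler_wpM2r ?divr_ge0 ?sqr_ge0 ?sq_ge0 //.
  exact: HM.
apply: le_trans (ler_sum_nat step) _ => /=.
have -> : \sum_(0 <= i < N) M2 * (sqv (xk i.+1) - sqv (xk i)) =
  M2 * \sum_(0 <= i < N) (sqv (xk i.+1) - sqv (xk i)) by rewrite mulr_sumr.
rewrite telescope_sumr // ler_wpM2l //.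
by rewrite /xk subnn /= gerBl sq_ge0.
Qed.

Lemma expect_bound (d0 : 0 < delta) (M2 : R) : 0 <= M2 ->
  (forall j, (j < N)%N -> sqv (colk Y j) <= M2) ->
  AAA N (fun u => expR (dotv x u)) <= expR (2/3 * delta ^+ 2 * (M2 * sqv x)).
Proof.
move=> M20 HM.
have := @AA_chain R m N delta Y w GG (fun k Hk u => GG_step d0 Hk u).
have -> : AAA N (GG N) = AAA N (fun u => expR (dotv x u)).
  apply: eq_bigr => b _; rewrite /GG /Cst big_geq // /xk subnn /= mulr0 addr0 //.
move/le_trans; apply.
rewrite /GG dotv0r add0r ler_expR ler_wpM2l ?Cst_bound //.
by rewrite mulr_ge0 // sqr_ge0.
Qed.
End Pot.

Unset Implicit Arguments. Set Strict Implicit.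


Lemma final_numeric (R : realType) (P : R) : 0 <= P -> 2 <= expR P ->
  2 * expR (- (3/4 * pi * P)) <= Num.sqrt 2 / expR P.
Proof.
move=> P0 P2.
have e1 : expR (- (3/4 * pi * P)) <= expR (- (3 * (P / 2))).
  rewrite ler_expR; have := @pi_ge2 R; nra.
set E2 := expR (P / 2).
have E20 : 0 < E2 by rewrite expR_gt0.
have EP : expR P = E2 ^+ 2 by rewrite /E2 -expRM_natl; congr expR; field.
have E3 : expR (- (3 * (P / 2))) = (E2 ^+ 3)^-1 by rewrite expRN /E2 -expRM_natl.
set r := Num.sqrt (2 : R).
have r0 : 0 <= r by rewrite sqrtr_ge0.
have rr : r ^+ 2 = 2 by rewrite sqr_sqrtr.
have rE : r <= E2.
  by rewrite /r -(ger0_norm (ltW E20)) -sqrtr_sqr ler_sqrt ?sqr_ge0 // -EP.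
apply: le_trans (_ : 2 * (E2 ^+ 3)^-1 <= _); first by rewrite -E3 ler_pM2l.
rewrite EP.
have : r / E2 ^+ 2 - 2 * (E2 ^+ 3)^-1 = r * (E2 - r) / E2 ^+ 3.
  rewrite -rr; field; rewrite gt_eqF //.
move=> H; rewrite -subr_ge0 H; apply: divr_ge0.
  by apply: mulr_ge0 => //; rewrite subr_ge0.
by apply: exprn_ge0; exact: ltW.
Qed.

Theorem mainTheorem2 (R : realType) (m N : nat) (delta : R)
    (Y : 'M[R]_(m, N)) (w : 'cV[R]_N) (p : nat) :
  (0 < N)%N -> 0 < delta -> (forall j : 'I_N, col j Y != 0) ->
  1 - Num.sqrt 2 * m%:R / (N%:R ^+ p) <=
  phase2_prob delta Y w
    (fun u => norm2 u <=
       delta * Num.sqrt (2 * pi * p%:R * m%:R * ln N%:R) * max_col_norm Y).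
Proof.
move=> N0 d0 Hcol.
set M := max_col_norm Y.
have leM : forall i : 'I_N, norm2 (col i Y) <= M.
  by move=> i; rewrite /M /max_col_norm (bigD1 i) //= le_max lexx.
have m0 : (0 < m)%N.
  case: (posnP m) => // m0; exfalso; move: (Hcol (Ordinal N0)) => /eqP; apply.
  by apply/matrixP => i j; exfalso; have := ltn_ord i; move: (nat_of_ord i) => k; rewrite m0.
have M0 : 0 < M.
  apply: lt_le_trans (leM (Ordinal N0)).
  rewrite norm2_sq sqrtr_gt0 lt_neqAle sq_ge0 andbT eq_sym.
  by apply/eqP => /sq_eq0 H; move: (Hcol (Ordinal N0)); rewrite H eqxx.
have HM : forall j, (j < N)%N -> sqv (colk Y j) <= M ^+ 2.
  move=> j Hj; rewrite (colk_ord Y Hj) -norm2_sqr lerXn2r // ?nnegrE ?sqrtr_ge0 ?ltW //.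
have Wt : \sum_(b : {ffun 'I_N -> bool}) (st delta Y w b N).2 = 1.
  by rewrite -(total_weight delta Y w) /AA; apply: eq_bigr => b _; rewrite mulr1.
rewrite /phase2_prob /phase2_weight /phase2_uN.
set T := delta * _ * M.
set E := fun b : {ffun 'I_N -> bool} => norm2 (phase2_state delta Y w b N).1 <= T.
have Wsplit : \sum_(b : {ffun 'I_N -> bool}) (phase2_state delta Y w b N).2 =
   \sum_(b | E b) (phase2_state delta Y w b N).2 + \sum_(b | ~~ E b) (phase2_state delta Y w b N).2.
  by apply: bigID.
have -> : \sum_(b | norm2 (phase2_state delta Y w b N).1 <= T) (phase2_state delta Y w b N).2
    = 1 - \sum_(b | ~~ E b) (phase2_state delta Y w b N).2.
  by rewrite -Wt Wsplit addrK.
have [Np1|Np1] := eqVneq (N%:R ^+ p : R) 1.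
  rewrite Np1 divr1 lerD2l lerN2.
  apply: le_trans (_ : 1 <= _).
    rewrite -Wt Wsplit lerDr; apply: sumr_ge0 => b _; exact: w_ge0.
  have h1 : 1 <= Num.sqrt (2 : R) by rewrite -{1}sqrtr1 ler_sqrt; lra.
  have h2 : 1 <= m%:R :> R by rewrite ler1n.
  nra.
rewrite lerD2l lerN2.
have Np : (2 <= N ^ p)%N.
  have h1 : (N ^ p != 1)%N by move: Np1; rewrite -natrX pnatr_eq1.
  have h2 : (0 < N ^ p)%N by rewrite expn_gt0 N0.
  lia.
set L := ln (N%:R : R).
have L0 : 0 <= L by rewrite ln_ge0 // ler1n.
set P := p%:R * L.
have P0 : 0 <= P by rewrite /P mulr_ge0.
have NP : N%:R ^+ p = expR P by rewrite /P expRM_natl lnK // posrE ltr0n.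
have P2 : 2 <= expR P by rewrite -NP -natrX (ler_nat R 2).
set K := delta ^+ 2 * M ^+ 2.
have K0 : 0 < K by rewrite /K mulr_gt0 // exprn_gt0.
set a2 := K * (2 * pi * P).
have a20 : 0 <= a2 by rewrite /a2 mulr_ge0 ?(ltW K0) // !mulr_ge0 // pi_ge0.
set a := Num.sqrt a2.
have a0 : 0 <= a by rewrite sqrtr_ge0.
have aa : a ^+ 2 = a2 by rewrite sqr_sqrtr.
set s := 3 * a / (4 * K).
have s0 : 0 <= s by rewrite /s divr_ge0 ?mulr_ge0 // ltW // mulr_gt0.
have TT : T = Num.sqrt (m%:R * a2).
  have -> : m%:R * a2 = (delta * M) ^+ 2 * (2 * pi * p%:R * m%:R * L) by rewrite /a2 /K /P; ring.
  rewrite sqrtrM ?sqr_ge0 // sqrtr_sqr ger0_norm ?mulr_ge0 ?ltW //.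
  by rewrite /T mulrAC.
set S := fun u : 'cV[R]_m => \sum_(i < m) (expR (s * (u i 0 - a)) + expR (s * (- u i 0 - a))).
have S0 : forall u, 0 <= S u.
  by move=> u; apply: sumr_ge0 => i _; rewrite addr_ge0 // expR_ge0.
have Ind : forall u : 'cV[R]_m, ~~ (norm2 u <= T) -> 1 <= S u.
  move=> u nE; case: (boolP [exists i, a < `|u i 0|]) => [/existsP [i Hi] | /existsPn Hall].
    rewrite /S (bigD1 i) //=.
    have r0 : 0 <= \sum_(j < m | j != i) (expR (s * (u j 0 - a)) + expR (s * (- u j 0 - a))).
      by apply: sumr_ge0 => j _; rewrite addr_ge0 // expR_ge0.
    have e1 := expR_ge0 (s * (u i 0 - a)); have e2 := expR_ge0 (s * (- u i 0 - a)).
    have : 1 <= expR (s * (u i 0 - a)) \/ 1 <= expR (s * (- u i 0 - a)).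
      have [ui|ui] := leP 0 (u i 0).
        left; apply: le_trans (expR_ge1Dx _); rewrite lerDl mulr_ge0 //.
        by move: Hi; rewrite ger0_norm //; lra.
      right; apply: le_trans (expR_ge1Dx _); rewrite lerDl mulr_ge0 //.
      by move: Hi; rewrite ltr0_norm //; lra.
    by case; lra.
  exfalso; move/negP: nE; apply.
  have ma0 : 0 <= m%:R * a2 by rewrite mulr_ge0.
  rewrite TT norm2_sq ler_sqrt //.
  apply: le_trans (_ : \sum_(i < m) a2 <= _).
    apply: ler_sum => i _; have := Hall i; rewrite -leNgt ler_norml => /andP[h1 h2].
    rewrite -aa; nra.
  by rewrite sumr_const card_ord mulr_natl.
apply: le_trans (_ : \sum_(b | ~~ E b) (phase2_state delta Y w b N).2 * S (phase2_state delta Y w b N).1 <= _).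
  apply: ler_sum => b Hb; rewrite -[X in X <= _]mulr1 ler_wpM2l //; first exact: w_ge0.
  exact: Ind.
apply: le_trans (_ : \sum_(b : {ffun 'I_N -> bool}) (phase2_state delta Y w b N).2 * S (phase2_state delta Y w b N).1 <= _).
  rewrite [X in _ <= X](bigID E) /= lerDr; apply: sumr_ge0 => b _.
  by rewrite mulr_ge0 //; exact: w_ge0.
have -> : \sum_(b : {ffun 'I_N -> bool}) (phase2_state delta Y w b N).2 * S (phase2_state delta Y w b N).1
   = \sum_(i < m) (expR (- (s * a)) * (AA delta Y w N (fun u => expR (dotv (ev i s) u))
        + AA delta Y w N (fun u => expR (dotv (ev i (- s)) u)))).
  rewrite /AA /st /S; under eq_bigr do rewrite mulr_sumr.
  rewrite exchange_big /=; apply: eq_bigr => i _.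
  rewrite mulrDr !mulr_sumr -big_split /=; apply: eq_bigr => b _.
  rewrite !dotv_ev.
  set u := (phase2_state delta Y w b N).1; set pw := (phase2_state delta Y w b N).2.
  have -> : expR (s * (u i 0 - a)) = expR (- (s * a)) * expR (s * u i 0).
    by rewrite -expRD; congr expR; ring.
  have -> : expR (s * (- u i 0 - a)) = expR (- (s * a)) * expR (- s * u i 0).
    by rewrite -expRD; congr expR; ring.
  ring.
set C := expR (- (s * a)) * (2 * expR (2/3 * delta ^+ 2 * (M ^+ 2 * s ^+ 2))).
apply: le_trans (_ : \sum_(i < m) C <= _).
  apply: ler_sum => i _; rewrite /C ler_wpM2l ?expR_ge0 //.
  have B1 := expect_bound w (ev i s) d0 (sqr_ge0 M) HM.
  have B2 := expect_bound w (ev i (- s)) d0 (sqr_ge0 M) HM.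
  rewrite sq_ev in B1; rewrite sq_ev sqrrN in B2.
  move: B1 B2; set X := expR _; lra.
rewrite sumr_const card_ord -[C *+ m]mulr_natl.
have CE : C = 2 * expR (- (3/4 * pi * P)).
  rewrite /C mulrCA -expRD; congr (2 * expR _).
  have -> : - (s * a) + 2 / 3 * delta ^+ 2 * (M ^+ 2 * s ^+ 2) = - (3/8) * a ^+ 2 / K.
    by rewrite /s /K; field; rewrite ?gt_eqF ?mulr_gt0 ?exprn_gt0.
  by rewrite aa /a2; field; rewrite gt_eqF.
rewrite CE NP.
have -> : Num.sqrt 2 * m%:R / expR P = m%:R * (Num.sqrt 2 / expR P) by rewrite mulrAC mulrC.
by rewrite ler_wpM2l ?ler0n // final_numeric.
Qed.
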